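(* There is an absolute constant $c>0$ such that for every $n,m\ge1$ and every sequence $S\in[n]^m$, each of the four quantities $\mathit{WB}(S)$, $\mathit{SO}(S)$, $\mathit{WSF}(S)$, $\mathit{FF}(S)$ is at most $c$ times any other one of them plus $c\,m$.
   Context: Let $S=(s_1,\dots,s_m)\in[n]^m$. Logarithms are base 2. A weight function is $w:[n]\to\mathbb R_{>0}$. Write $W=\sum_{i=1}^n w(i)$ and $w[a:b]=\sum_{i=\min(a,b)}^{\max(a,b)} w(i)$. For a BST $T$ on $[n]$, $d_T(i)$ is the depth of $i$ (distance from the root, with the root at depth $0$), and $d_T(a,b)$ is the number of edges on the path between $a$ and $b$. The four bounds are: - Weighted balance: $\mathit{WB}(S)=\inf_w\sum_{j=1}^m\log\frac{W}{w(s_j)}$. - Static optimality: $\mathit{SO}(S)=\min_T\sum_{j=1}^m d_T(s_j)$. - Weighted static finger: $\mathit{WSF}(S)=\inf_{w,f}\sum_{j=1}^m\log\frac{w[f:s_j]}{\min\{w(f),w(s_j)\}}$, with $f$ ranging over $[n]$. - Fixed finger: $\mathit{FF}(S)=\min_{T,f}\sum_{j=1}^m d_T(f,s_j)$. Minima are taken over BSTs $T$ on $[n]$ and keys $f\in[n]$. *)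

(* Defs.v *)
From mathcomp Require Import all_boot all_order all_algebra.
From mathcomp Require Import classical_sets reals exp.
Set Implicit Arguments. Unset Strict Implicit. Unset Printing Implicit Defensive.
Import Order.TTheory GRing.Theory Num.Theory.
Local Open Scope ring_scope.
Local Open Scope classical_set_scope.

Inductive tree := Leaf | Node of tree & nat & tree.

Fixpoint inorder (t : tree) : seq nat :=
  match t with Leaf => [::] | Node l k r => inorder l ++ k :: inorder r end.

Definition is_bst_on (n : nat) (t : tree) : Prop := inorder t = iota 1 n.

Fixpoint depth (t : tree) (i : nat) : nat :=
  match t with
  | Leaf => 0%N
  | Node l k r =>
      if (i < k)%N then (depth l i).+1
      else if (k < i)%N then (depth r i).+1 else 0%N
  end.

Fixpoint dist (t : tree) (a b : nat) : nat :=
  match t with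
  | Leaf => 0%N
  | Node l k r =>
      if (a < k)%N && (b < k)%N then dist l a b
      else if (k < a)%N && (k < b)%N then dist r a b
      else (depth t a + depth t b)%N
  end.

Section Bounds.
Variable R : realType.

Definition log2 (x : R) : R := ln x / ln 2.

Definition in_range (n i : nat) : bool := (1 <= i <= n)%N.

Definition pos_weight (n : nat) (w : nat -> R) : Prop :=
  forall i, in_range n i -> 0 < w i.

Definition Wtot (n : nat) (w : nat -> R) : R := \sum_(1 <= i < n.+1) w i.

Definition wseg (w : nat -> R) (a b : nat) : R :=
  \sum_(minn a b <= i < (maxn a b).+1) w i.

Definition WB (n : nat) (S : seq nat) : R :=
  inf [set x | exists w, pos_weight n w /\
        x = \sum_(s <- S) log2 (Wtot n w / w s)].

Definition SO (n : nat) (S : seq nat) : R :=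
  inf [set x | exists t, is_bst_on n t /\
        x = ((\sum_(s <- S) depth t s)%N)%:R].

Definition WSF (n : nat) (S : seq nat) : R :=
  inf [set x | exists w f, pos_weight n w /\ in_range n f /\
        x = \sum_(s <- S) log2 (wseg w f s / Num.min (w f) (w s))].

Definition FF (n : nat) (S : seq nat) : R :=
  inf [set x | exists t f, is_bst_on n t /\ in_range n f /\
        x = ((\sum_(s <- S) dist t f s)%N)%:R].

End Bounds.

Inductive bound_kind := WBk | SOk | WSFk | FFk.

Definition bound (R : realType) (k : bound_kind) : nat -> seq nat -> R :=
  match k with
  | WBk => @WB R | SOk => @SO R | WSFk => @WSF R | FFk => @FF R
  end.

(* Main.v *)
Require Import Defs.
From mathcomp Require Import all_boot all_order all_algebra.
From mathcomp Require Import classical_sets reals exp.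
From mathcomp Require Import ring lra zify.
Set Implicit Arguments. Unset Strict Implicit. Unset Printing Implicit Defensive.
Import Order.TTheory GRing.Theory Num.Theory.
Local Open Scope ring_scope.


Section Aux.
Local Open Scope classical_set_scope.
Variable R : realType.

Lemma inf_aff (A B : set R) (a b : R) : 0 < a -> has_lbound A -> B !=set0 ->
  (forall y, B y -> exists x, A x /\ x <= a * y + b) -> inf A <= a * inf B + b.
Proof.
move=> a0 lA nB H.
have: (inf A - b) / a <= inf B.
  apply: lb_le_inf => // y By.
  have [x [Ax xle]] := H y By.
  have := ge_inf lA Ax.
  rewrite ler_pdivrMr // => h; lra.
rewrite ler_pdivrMr // => h; lra.
Qed.

Lemma ln2_gt0 : 0 < ln (2 : R).
Proof. apply: ln_gt0; lra. Qed.

Lemma log2_ge0 (x : R) : 1 <= x -> 0 <= log2 x.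
Proof. move=> h; rewrite /log2 divr_ge0 //; [exact: ln_ge0 | exact: ltW ln2_gt0]. Qed.

Lemma log2_le (x y : R) : 0 < x -> x <= y -> log2 x <= log2 y.
Proof.
move=> x0 xy; rewrite /log2 ler_pM2r ?invr_gt0 ?ln2_gt0 //.
by rewrite ler_ln // posrE //; apply: lt_le_trans xy.
Qed.

Lemma log2M (x y : R) : 0 < x -> 0 < y -> log2 (x * y) = log2 x + log2 y.
Proof. by move=> x0 y0; rewrite /log2 lnM ?posrE // mulrDl. Qed.

Lemma log2V (x : R) : 0 < x -> log2 (x^-1) = - log2 x.
Proof. by move=> x0; rewrite /log2 lnV ?posrE // mulNr. Qed.

Lemma log2X (x : R) n : 0 < x -> log2 (x ^+ n) = log2 x *+ n.
Proof. by move=> x0; rewrite /log2 lnXn // mulrnAl. Qed.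

Lemma log2_2 : log2 (2 : R) = 1.
Proof. by rewrite /log2 divff // gt_eqF // ln2_gt0. Qed.

Lemma log2_4 : log2 (4 : R) = 2.
Proof. by rewrite -[4](_ : 2 ^+ 2 = _) ?log2X ?log2_2 //; lra. Qed.

End Aux.
Lemma pw_node l k r : pairwise ltn (inorder (Node l k r)) ->
  [/\ pairwise ltn (inorder l), pairwise ltn (inorder r),
      (forall s, s \in inorder l -> (s < k)%N) & (forall s, s \in inorder r -> (k < s)%N)].
Proof.
rewrite /= pairwise_cat /= => /and3P[hlr pl /andP[hk pr]].
split=> //.
- move=> s sl; move/allrelP: hlr => /(_ s k sl); apply; exact: mem_head.
- by move=> s sr; move/allP: hk => /(_ s sr).
Qed.

Section Trees.
Local Open Scope classical_set_scope.
Variable R : realType.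
Let q : R := 4^-1.

Definition Dt (t : tree) : R := \sum_(s <- inorder t) q ^+ depth t s.
Definition Gt (t : tree) f : R := \sum_(s <- inorder t) q ^+ dist t f s.

Lemma q_gt0 : 0 < q. Proof. by rewrite /q invr_gt0; lra. Qed.
Lemma qX_ge0 d : 0 <= q ^+ d. Proof. exact/exprn_ge0/ltW/q_gt0. Qed.
Lemma qX_le1 d : q ^+ d <= 1.
Proof. apply: exprn_ile1; [exact/ltW/q_gt0| rewrite /q invf_le1; lra]. Qed.

Lemma Dt_ge0 t : 0 <= Dt t.
Proof. by apply: sumr_ge0 => s _; apply: qX_ge0. Qed.

Lemma Gt_ge0 t f : 0 <= Gt t f.
Proof. by apply: sumr_ge0 => s _; apply: qX_ge0. Qed.

Lemma sum_cc (F : nat -> R) s1 x s2 :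
  \sum_(i <- s1 ++ x :: s2) F i = \sum_(i <- s1) F i + (F x + \sum_(i <- s2) F i).
Proof. by rewrite big_cat big_cons. Qed.

Lemma depthNl l k r s : (s < k)%N -> depth (Node l k r) s = (depth l s).+1.
Proof. by move=> h; rewrite /= h. Qed.
Lemma depthNr l k r s : (k < s)%N -> depth (Node l k r) s = (depth r s).+1.
Proof. by move=> h; rewrite /= h ltnNge (ltnW h). Qed.
Lemma depthNk l k r : depth (Node l k r) k = 0%N.
Proof. by rewrite /= ltnn. Qed.
Lemma distNl l k r a b : (a < k)%N -> (b < k)%N -> dist (Node l k r) a b = dist l a b.
Proof. by move=> ha hb; rewrite /= ha hb. Qed.
Lemma distNr l k r a b : (k < a)%N -> (k < b)%N -> dist (Node l k r) a b = dist r a b.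
Proof. by move=> ha hb; rewrite /= ha hb ltnNge (ltnW ha). Qed.
Lemma distNs l k r a b : (a <= k)%N -> (k <= b)%N ->
  dist (Node l k r) a b = (depth (Node l k r) a + depth (Node l k r) b)%N.
Proof.
move=> ha hb; rewrite [LHS]/=.
have -> : ((a < k) && (b < k))%N = false by apply/negbTE; rewrite negb_and -!leqNgt hb orbT.
by have -> : ((k < a) && (k < b))%N = false by apply/negbTE; rewrite negb_and -!leqNgt ha.
Qed.
Lemma distNs' l k r a b : (b <= k)%N -> (k <= a)%N ->
  dist (Node l k r) a b = (depth (Node l k r) a + depth (Node l k r) b)%N.
Proof.
move=> ha hb; rewrite [LHS]/=.
have -> : ((a < k) && (b < k))%N = false by apply/negbTE; rewrite negb_and -!leqNgt hb.
by have -> : ((k < a) && (k < b))%N = false by apply/negbTE; rewrite negb_and -!leqNgt ha orbT.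
Qed.

Lemma tree_bound t : pairwise ltn (inorder t) ->
  Dt t <= 2 /\ forall f, f \in inorder t -> Gt t f <= 5/2 - q ^+ depth t f / 2.
Proof.
elim: t => [|l IHl k r IHr]; first by split=> //; rewrite /Dt big_nil; lra.
move=> /pw_node[pl pr hl hr].
have [Dl Gl] := IHl pl; have [Dr Gr] := IHr pr.
have Dl0 := Dt_ge0 l; have Dr0 := Dt_ge0 r.
have DN : Dt (Node l k r) = q * Dt l + 1 + q * Dt r.
  rewrite /Dt [inorder _]/= sum_cc depthNk expr0 !mulr_sumr addrA; congr (_ + _ + _).
    by apply: eq_big_seq => s /hl sk; rewrite depthNl // exprS.
  by apply: eq_big_seq => s /hr ks; rewrite depthNr // exprS.
have q4 : q = 4^-1 by [].
have qq : q * 4 = 1 by rewrite q4 mulVf //; lra.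
have q0 := q_gt0.
split.
  rewrite DN; nra.
move=> f; rewrite [inorder _]/= mem_cat in_cons => /or3P[fl|/eqP->|fr].
- have fk := hl f fl.
  rewrite /Gt [inorder _]/= sum_cc.
  rewrite (eq_big_seq (fun s => q ^+ dist l f s)); last first.
    by move=> s /hl sk; rewrite distNl.
  rewrite distNs ?(ltnW fk) // depthNk depthNl // addn0.
  rewrite [\sum_(j <- inorder r) _](eq_big_seq (fun s => q ^+ (depth l f).+1 * (q * q ^+ depth r s))); last first.
    move=> s /hr ks.
    by rewrite distNs ?(ltnW fk) ?(ltnW ks) // depthNl // depthNr // -exprS -exprD.
  rewrite -mulr_sumr -mulr_sumr -/(Dt r).
  have := Gl f fl; rewrite -/(Gt l f) exprS.
  set a := q ^+ depth l f.
  have a0 : 0 <= a := qX_ge0 _.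
  move=> h; nra.
- rewrite depthNk /Gt [inorder _]/= sum_cc distNs // !depthNk expr0.
  rewrite (eq_big_seq (fun s => q * q ^+ depth l s)); last first.
    by move=> s /hl sk; rewrite distNs' ?(ltnW sk) // depthNk depthNl // exprS.
  rewrite [\sum_(j <- inorder r) _](eq_big_seq (fun s => q * q ^+ depth r s)); last first.
    by move=> s /hr ks; rewrite distNs ?(ltnW ks) // depthNk depthNr // exprS.
  rewrite -!mulr_sumr -/(Dt l) -/(Dt r); nra.
- have kf := hr f fr.
  rewrite /Gt [inorder _]/= sum_cc.
  rewrite [\sum_(j <- inorder r) _](eq_big_seq (fun s => q ^+ dist r f s)); last first.
    by move=> s /hr ks; rewrite distNr.
  rewrite distNs' ?(ltnW kf) // depthNk depthNr // addn0.
  rewrite [\sum_(j <- inorder l) _](eq_big_seq (fun s => q ^+ (depth r f).+1 * (q * q ^+ depth l s))); last first.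
    move=> s /hl sk.
    by rewrite distNs' ?(ltnW kf) ?(ltnW sk) // (@depthNl l k r s sk) (@depthNr l k r f kf) -exprS -exprD.
  rewrite -mulr_sumr -mulr_sumr -/(Dt l).
  have := Gr f fr; rewrite -/(Gt r f) exprS.
  set a := q ^+ depth r f.
  have a0 : 0 <= a := qX_ge0 _.
  move=> h; nra.
Qed.

End Trees.


Section W.
Local Open Scope classical_set_scope.
Variable R : realType.

Lemma sumn_split (F : nat -> R) m n p : (m <= n <= p)%N ->
  \sum_(m <= i < p) F i = \sum_(m <= i < n) F i + \sum_(n <= i < p) F i.
Proof. by move=> /andP[h1 h2]; rewrite (big_cat_nat h1 h2). Qed.

Lemma sum_first (F : nat -> R) m n : (m < n)%N ->
  \sum_(m <= i < n) F i = F m + \sum_(m.+1 <= i < n) F i.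
Proof. by move=> h; rewrite big_ltn. Qed.

Lemma sum_ge0n (F : nat -> R) m n : (forall i, (m <= i < n)%N -> 0 <= F i) ->
  0 <= \sum_(m <= i < n) F i.
Proof. by move=> h; rewrite big_nat; apply: sumr_ge0 => i /h. Qed.

Lemma sum_posn (F : nat -> R) m n : (m < n)%N -> (forall i, (m <= i < n)%N -> 0 < F i) ->
  0 < \sum_(m <= i < n) F i.
Proof.
move=> mn h; rewrite sum_first //.
have := h m; rewrite leqnn mn => /(_ isT) h1.
have : 0 <= \sum_(m.+1 <= i < n) F i.
  by apply: sum_ge0n => i /andP[h2 h3]; apply/ltW/h; rewrite h3 ltnW.
lra.
Qed.

Lemma wtree (w : nat -> R) L : forall a, (forall i, (a <= i < a+L)%N -> 0 < w i) ->
  exists t, inorder t = iota a L /\ forall s, (a <= s < a+L)%N ->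
    (depth t s)%:R <= log2 ((\sum_(a <= i < a+L) w i) / w s).
Proof.
elim/ltn_ind: L => L IH a hw.
case: L IH hw => [|L'] IH hw.
  by exists Leaf; split=> // s; rewrite addn0 => /andP[h1 h2]; have := leq_trans h2 h1; rewrite ltnn.
set L := L'.+1 in IH hw *.
set W := \sum_(a <= i < a+L) w i.
have W0 : 0 < W by apply: sum_posn => //; rewrite addnS ltnS leq_addr.
pose P j := (j < L)%N && (W/2 <= \sum_(a <= i < a + j.+1) w i).
have exP : exists j, P j.
  exists L'; rewrite /P ltnSn /= -/L -/W; lra.
case: (ex_minnP exP) => j /andP[jL hj] jmin.
set Wl := \sum_(a <= i < a + j) w i.
set Wr := \sum_((a + j).+1 <= i < a + L) w i.
have WE : W = Wl + w (a + j) + Wr.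
  rewrite /W (@sumn_split _ a (a+j) (a+L)); last by rewrite leq_addr leq_add2l ltnW.
  by rewrite [\sum_(a + j <= i < _) _]sum_first ?ltn_add2l // addrA.
have WlE : \sum_(a <= i < a + j.+1) w i = Wl + w (a + j).
  by rewrite addnS big_nat_recr //= leq_addr.
have Wl0 : 0 <= Wl by apply: sum_ge0n => i hi; apply/ltW/hw; lia.
have Wr0 : 0 <= Wr by apply: sum_ge0n => i hi; apply/ltW/hw; lia.
have wj0 : 0 < w (a + j) by apply: hw; lia.
have Wlh : Wl <= W / 2.
  case: (posnP j) => [j0|jpos].
    by rewrite /Wl j0 addn0 big_geq //; lra.
  have := jmin j.-1; rewrite /P (ltn_trans _ jL) ?prednK // ?ltn_predL // /= => h.
  have : ~~ (W / 2 <= Wl) by apply/negP => /h; rewrite -ltnS prednK // ltnn.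
  by rewrite -ltNge => /ltW.
have Wrh : Wr <= W / 2 by move: hj; rewrite WlE; lra.
have [tl [tlE tlD]] := IH j jL a ltac:(move=> i hi; apply: hw; lia).
have [tr [trE trD]] := IH (L - j.+1)%N ltac:(lia) (a + j).+1 ltac:(move=> i hi; apply: hw; lia).
exists (Node tl (a + j) tr); split.
  rewrite /= tlE trE.
  rewrite -[a :: _]/(iota a L) [in RHS](_ : L = (j + (L - j.+1).+1)%N); last by lia.
  by rewrite iotaD /= ?addSn ?addnS.
have key : forall X, 0 < X -> X <= W / 2 -> forall s, 0 < w s -> 1 + log2 (X / w s) <= log2 (W / w s).
  move=> X X0 XW s ws.
  have -> : W / w s = (W / 2 / w s) * 2 by field; lra.
  rewrite log2M ?log2_2; last 2 first.
  - by rewrite divr_gt0 // divr_gt0.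
  - lra.
  by rewrite addrC lerD2r; apply: log2_le; [rewrite divr_gt0|rewrite ler_pM2r ?invr_gt0].
move=> s hs.
have ws : 0 < w s by apply: hw.
case: (ltngtP s (a + j)) => hsj.
- rewrite depthNl // -addn1 natrD.
  have Wlp : 0 < Wl by rewrite /Wl; apply: sum_posn; [lia | move=> i hi; apply: hw; lia].
  have := tlD s ltac:(lia); have := key Wl Wlp Wlh s ws; rewrite -/Wl; lra.
- rewrite depthNr // -addn1 natrD.
  have Wrp : 0 < Wr by rewrite /Wr; apply: sum_posn; [lia | move=> i hi; apply: hw; lia].
  have Ee : ((a + j).+1 + (L - j.+1))%N = (a + L)%N by lia.
  have := trD s ltac:(lia); rewrite Ee -/Wr.
  have := key Wr Wrp Wrh s ws; lra.
- rewrite hsj depthNk /=; apply: log2_ge0.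
  by rewrite ler_pdivlMr // mul1r WE; lra.
Qed.

End W.


Section S.
Local Open Scope classical_set_scope.
Variable R : realType.

Lemma step_ineq (p u : R) : 0 < p -> 0 < u -> u / (p + u) ^+ 2 <= p^-1 - (p + u)^-1.
Proof.
move=> p0 u0; rewrite -subr_ge0.
have -> : p^-1 - (p + u)^-1 - u / (p + u) ^+ 2 = u ^+ 2 / (p * (p + u) ^+ 2).
  by field; apply/andP; split; lra.
by apply: divr_ge0; [apply: exprn_ge0; lra | apply: mulr_ge0; [lra|apply: exprn_ge0; lra]].
Qed.

Lemma seq_key (u P : nat -> R) J : (forall j, (j <= J)%N -> 0 < u j) -> P 0%N = u 0%N ->
  (forall j, (j < J)%N -> P j.+1 = P j + u j.+1) ->
  \sum_(0 <= j < J.+1) (Num.min (u 0%N) (u j) / P j) ^+ 2 <= 2.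
Proof.
move=> hu P0 hP.
have u00 : 0 < u 0%N by apply: hu.
have Pge : forall j, (j <= J)%N -> u 0%N <= P j.
  elim=> [|j IH] hj; first by rewrite P0.
  rewrite hP //; have := IH (ltnW hj); have := hu j.+1 hj; lra.
have claim : forall K, (K <= J)%N ->
    \sum_(0 <= j < K.+1) u j / P j ^+ 2 <= 2 / u 0%N - (P K)^-1.
  elim=> [|K IH] hK.
    rewrite big_nat1 P0 expr2 invfM mulrA divff ?mul1r; last lra.
    have : 0 < (u 0%N)^-1 by rewrite invr_gt0.
    rewrite -[2 / _]/(2 * (u 0%N)^-1); lra.
  rewrite big_nat_recr //=.
  have := IH (ltnW hK).
  have PK0 : 0 < P K by have := Pge K (ltnW hK); lra.
  have := step_ineq PK0 (hu K.+1 hK).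
  rewrite hP //; lra.
have terms : forall j, (j <= J)%N -> (Num.min (u 0%N) (u j) / P j) ^+ 2 <= u 0%N * (u j / P j ^+ 2).
  move=> j hj; have uj := hu j hj; have Pj := Pge j hj.
  rewrite expr_div_n mulrA ler_pM2r ?invr_gt0 ?exprn_gt0 //; last lra.
  have m0 : 0 <= Num.min (u 0%N) (u j) by rewrite le_min; apply/andP; split; lra.
  rewrite expr2; apply: ler_pM => //.
    by rewrite ge_min lexx.
  by rewrite ge_min lexx orbT.
apply: (le_trans (y := \sum_(0 <= j < J.+1) u 0%N * (u j / P j ^+ 2))).
  by rewrite big_nat [X in _ <= X]big_nat; apply: ler_sum => j /andP[_ hj]; apply: terms.
rewrite -mulr_sumr.
have := claim J (leqnn J).
have PJ0 : 0 < P J by have := Pge J (leqnn J); lra.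
have : 0 < (P J)^-1 by rewrite invr_gt0.
move=> h1 h2.
apply: (le_trans (y := u 0%N * (2 / u 0%N - (P J)^-1))).
  by rewrite ler_pM2l.
rewrite mulrBr mulrCA divff ?mulr1; last lra.
have : 0 < u 0%N * (P J)^-1 by rewrite mulr_gt0.
lra.
Qed.

End S.


Section E.
Local Open Scope classical_set_scope.
Variable R : realType.

Lemma sub_sum (F : nat -> R) m m' n' n : (m <= m')%N -> (m' <= n')%N -> (n' <= n)%N ->
  (forall i, (m <= i < n)%N -> 0 <= F i) ->
  \sum_(m' <= i < n') F i <= \sum_(m <= i < n) F i.
Proof.
move=> h1 h2 h3 hF.
rewrite (@sumn_split _ _ m m' n); last by rewrite h1 /= (leq_trans h2 h3).
rewrite (@sumn_split _ _ m' n' n); last by rewrite h2 h3.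
have : 0 <= \sum_(m <= i < m') F i by apply: sum_ge0n => i hi; apply: hF; lia.
have : 0 <= \sum_(n' <= i < n) F i by apply: sum_ge0n => i hi; apply: hF; lia.
lra.
Qed.

Lemma wseg_bounds n (w : nat -> R) f s : pos_weight n w -> in_range n f -> in_range n s ->
  [/\ w s <= wseg w f s, w f <= wseg w f s & wseg w f s <= Wtot n w].
Proof.
rewrite /in_range => hw hf hs.
have hF : forall i, (1 <= i < n.+1)%N -> 0 <= w i by move=> i hi; apply/ltW/hw; rewrite /in_range; lia.
split.
- have -> : w s = \sum_(s <= i < s.+1) w i by rewrite big_nat1.
  rewrite /wseg; apply: sub_sum; try lia.
  by move=> i hi; apply: hF; lia.
- have -> : w f = \sum_(f <= i < f.+1) w i by rewrite big_nat1.
  rewrite /wseg; apply: sub_sum; try lia.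
  by move=> i hi; apply: hF; lia.
- rewrite /wseg /Wtot; apply: sub_sum => //; lia.
Qed.

Lemma w_le_Wtot n (w : nat -> R) s : pos_weight n w -> in_range n s -> w s <= Wtot n w.
Proof.
move=> hw hs; have [h1 _ h2] := wseg_bounds hw hs hs; exact: le_trans h1 h2.
Qed.

Lemma WB_term_ge0 n (w : nat -> R) s : pos_weight n w -> in_range n s ->
  0 <= log2 (Wtot n w / w s).
Proof.
move=> hw hs; have ws := hw s hs; apply: log2_ge0.
by rewrite ler_pdivlMr // mul1r; apply: w_le_Wtot.
Qed.

Lemma WSF_term_ge0 n (w : nat -> R) f s : pos_weight n w -> in_range n f -> in_range n s ->
  0 <= log2 (wseg w f s / Num.min (w f) (w s)).
Proof.
move=> hw hf hs; have ws := hw s hs; have wf := hw f hf.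
have m0 : 0 < Num.min (w f) (w s) by rewrite lt_min wf ws.
have [h1 _ _] := wseg_bounds hw hf hs.
apply: log2_ge0; rewrite ler_pdivlMr // mul1r.
by apply: le_trans h1; rewrite ge_min lexx orbT.
Qed.

Lemma sum_aff (S : seq nat) (a b : nat -> R) :
  (forall s, s \in S -> a s <= 2 + 2 * b s) ->
  \sum_(s <- S) a s <= 2 * \sum_(s <- S) b s + 2 * (size S)%:R.
Proof.
elim: S => [|x S IH] h; first by rewrite !big_nil /= !mulr0 addr0.
rewrite !big_cons /= -addn1 natrD.
have := h x (mem_head _ _).
have := IH (fun s hs => h s ltac:(by rewrite in_cons hs orbT)).
lra.
Qed.

Definition WBset n (S : seq nat) : set R := [set x | exists w, pos_weight n w /\
        x = \sum_(s <- S) log2 (Wtot n w / w s)].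
Definition SOset n (S : seq nat) : set R := [set x | exists t, is_bst_on n t /\
        x = ((\sum_(s <- S) depth t s)%N)%:R].
Definition WSFset n (S : seq nat) : set R := [set x | exists w f, pos_weight n w /\ in_range n f /\
        x = \sum_(s <- S) log2 (wseg w f s / Num.min (w f) (w s))].
Definition FFset n (S : seq nat) : set R := [set x | exists t f, is_bst_on n t /\ in_range n f /\
        x = ((\sum_(s <- S) dist t f s)%N)%:R].

Lemma one_pos n : pos_weight n (fun _ => 1 : R).
Proof. by move=> i _; exact: ltr01. Qed.

Lemma WB_lb n S : all (in_range n) S -> has_lbound (WBset n S).
Proof.
move=> /allP hS; exists 0 => x [w [hw ->]].
by rewrite big_seq; apply: sumr_ge0 => s /hS hs; apply: WB_term_ge0.
Qed.

Lemma WB_ne n S : WBset n S !=set0.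
Proof. by eexists; exists (fun _ => 1); split; [exact: one_pos|]. Qed.

Lemma WSF_lb n S : all (in_range n) S -> has_lbound (WSFset n S).
Proof.
move=> /allP hS; exists 0 => x [w [f [hw [hf ->]]]].
rewrite big_seq; apply: sumr_ge0 => s /hS hs; exact: (WSF_term_ge0 hw hf hs).
Qed.

Lemma WSF_ne n S : (1 <= n)%N -> WSFset n S !=set0.
Proof.
move=> n1; eexists; exists (fun _ => 1), 1%N; split; first exact: one_pos.
split; last reflexivity.
by rewrite /in_range leqnn n1.
Qed.

Lemma SO_lb n S : has_lbound (SOset n S).
Proof. by exists 0 => x [t [_ ->]]. Qed.

Lemma FF_lb n S : has_lbound (FFset n S).
Proof. by exists 0 => x [t [f [_ [_ ->]]]]. Qed.

Lemma bst_ex n : exists t, is_bst_on n t.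
Proof.
have [t [tE _]] := @wtree R (fun _ => 1) n 1%N (fun i _ => ltr01).
by exists t.
Qed.

Lemma SO_ne n S : SOset n S !=set0.
Proof. by have [t ht] := bst_ex n; eexists; exists t; split. Qed.

Lemma FF_ne n S : (1 <= n)%N -> FFset n S !=set0.
Proof.
move=> n1; have [t ht] := bst_ex n; eexists; exists t, 1%N; split; first exact: ht.
by split; [rewrite /in_range leqnn n1|reflexivity].
Qed.

Lemma WB_ge0 n S : all (in_range n) S -> 0 <= WB R n S.
Proof.
move=> hS; apply: lb_le_inf; first exact: WB_ne.
move=> x [w [hw ->]]; move/allP: hS => hS.
by rewrite big_seq; apply: sumr_ge0 => s /hS hs; apply: WB_term_ge0.
Qed.

Lemma SO_le_WB n S : all (in_range n) S -> SO R n S <= WB R n S.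
Proof.
move=> /allP hS.
have := @inf_aff R (SOset n S) (WBset n S) 1 0 ltr01 (SO_lb n S) (WB_ne n S).
rewrite mul1r addr0; apply.
move=> y [w [hw ->]].
have [t [tE tD]] := @wtree R w n 1%N (fun i hi => hw i ltac:(rewrite /in_range; lia)).
exists ((\sum_(s <- S) depth t s)%N)%:R; split; first by exists t.
rewrite mul1r addr0 natr_sum big_seq [X in _ <= X]big_seq; apply: ler_sum => s /hS hs.
have := tD s ltac:(move: hs; rewrite /in_range; lia).
by rewrite add1n.
Qed.

Lemma dist_root l k r s : dist (Node l k r) k s = depth (Node l k r) s.
Proof.
case: (leqP s k) => h.
  by rewrite distNs' // depthNk.
by rewrite distNs // ?(ltnW h) // depthNk.
Qed.

Lemma FF_le_SO n S : (1 <= n)%N -> FF R n S <= SO R n S.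
Proof.
move=> n1.
have := @inf_aff R (FFset n S) (SOset n S) 1 0 ltr01 (FF_lb n S) (SO_ne n S).
rewrite mul1r addr0; apply.
move=> y [t [ht ->]].
case: t ht => [|l k r] ht.
  by move: ht; rewrite /is_bst_on /=; case: n n1.
have hk : in_range n k.
  have : k \in iota 1 n by rewrite -ht /= mem_cat mem_head orbT.
  by rewrite mem_iota /in_range; lia.
exists ((\sum_(s <- S) dist (Node l k r) k s)%N)%:R; split; first by exists (Node l k r), k.
rewrite mul1r addr0 le_eqVlt; apply/orP; left; apply/eqP; congr (_ %:R).
by apply: eq_bigr => s _; rewrite dist_root.
Qed.

End E.


Section F.
Local Open Scope classical_set_scope.
Variable R : realType.

Lemma argmax n (w : nat -> R) : (1 <= n)%N ->
  exists f, in_range n f /\ forall i, in_range n i -> w i <= w f.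
Proof.
elim: n => [//|n IH] _.
case: (posnP n) => [->|npos].
  exists 1%N; split => // i; rewrite /in_range => hi.
  by have -> : i = 1%N by lia.
have [f [hf fmax]] := IH npos.
case: (leP (w n.+1) (w f)) => h.
  exists f; split; first by move: hf; rewrite /in_range; lia.
  move=> i; rewrite /in_range => hi.
  case: (ltnP i n.+1) => hi'.
    by apply: fmax; rewrite /in_range; lia.
  by have -> : i = n.+1 by lia.
exists n.+1; split; first by rewrite /in_range; lia.
move=> i; rewrite /in_range => hi.
case: (ltnP i n.+1) => hi'.
  apply: le_trans (ltW h); apply: fmax; rewrite /in_range; lia.
by have -> : i = n.+1 by lia.
Qed.

Lemma WSF_le_WB n S : (1 <= n)%N -> all (in_range n) S -> WSF R n S <= WB R n S.
Proof.
move=> n1 hS.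
have := @inf_aff R (WSFset n S) (WBset n S) 1 0 ltr01 (WSF_lb R hS) (WB_ne R n S).
rewrite mul1r addr0; apply.
move=> y [w [hw ->]].
have [f [hf fmax]] := argmax w n1.
exists (\sum_(s <- S) log2 (wseg w f s / Num.min (w f) (w s))).
split; first by exists w, f.
rewrite mul1r addr0 big_seq [X in _ <= X]big_seq; apply: ler_sum => s.
move/allP: hS => hS /hS hs.
have ws := hw s hs.
rewrite min_r; last exact: fmax.
have [h1 _ h2] := wseg_bounds hw hf hs.
apply: log2_le; first by rewrite divr_gt0 //; apply: lt_le_trans h1.
by rewrite ler_pM2r ?invr_gt0.
Qed.

Lemma Wtot_seq n (w : nat -> R) : Wtot n w = \sum_(i <- iota 1 n) w i.
Proof. by rewrite /Wtot /index_iota subSS subn0. Qed.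

Lemma WB_le_FF n S : (1 <= n)%N -> all (in_range n) S ->
  WB R n S <= 2 * FF R n S + 2 * (size S)%:R.
Proof.
move=> n1 hS.
apply: (@inf_aff R (WBset n S) (FFset n S) 2 (2 * (size S)%:R)); [lra|exact: (WB_lb R hS)|exact: (FF_ne R S n1)|].
move=> y [t [f [ht [hf ->]]]].
pose q : R := 4^-1.
have q0 : 0 < q by rewrite /q invr_gt0; lra.
pose w := fun s => q ^+ dist t f s.
have hw : pos_weight n w by move=> i _; rewrite /w exprn_gt0.
exists (\sum_(s <- S) log2 (Wtot n w / w s)); split; first by exists w.
rewrite natr_sum; apply: sum_aff => s hs.
have W4 : Wtot n w <= 4.
  rewrite Wtot_seq -ht.
  have pw : pairwise ltn (inorder t) by rewrite ht -sorted_pairwise ?iota_ltn_sorted //; exact: ltn_trans.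
  have [_ Gb] := @tree_bound R t pw.
  have fin : f \in inorder t by rewrite ht mem_iota; move: hf; rewrite /in_range; lia.
  have := Gb f fin; rewrite /Gt -/q.
  have : 0 <= q ^+ depth t f / 2 by rewrite divr_ge0 // exprn_ge0 // ltW.
  lra.
have ws : 0 < w s by rewrite /w exprn_gt0.
apply: (le_trans (y := log2 (4 / w s))).
  have hs' : in_range n s by move/allP: hS; apply.
  apply: log2_le; first by rewrite divr_gt0 //; apply: lt_le_trans (w_le_Wtot hw hs').
  by rewrite ler_pM2r ?invr_gt0.
rewrite log2M ?invr_gt0 //.
rewrite log2_4 /w /q -exprVn invrK log2X; last lra.
by rewrite log2_4 mulr_natr.
Qed.

End F.


Section G.
Local Open Scope classical_set_scope.
Variable R : realType.

Lemma sum_rev (F : nat -> R) f :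
  \sum_(1 <= s < f.+1) F s = \sum_(0 <= j < f) F (f - j)%N.
Proof.
elim: f => [|f IH]; first by rewrite !big_geq.
rewrite big_nat_recr //= IH [in RHS]sum_first // big_add1 /= subn0 addrC.
by congr (_ + _); apply: eq_bigr => j _; rewrite subSS.
Qed.

Lemma sum_shift (F : nat -> R) f n : (f <= n)%N ->
  \sum_(f <= s < n.+1) F s = \sum_(0 <= j < (n - f).+1) F (j + f)%N.
Proof.
move=> fn; rewrite -{1}[f]add0n big_addn.
by have -> : (n.+1 - f = (n - f).+1)%N by lia.
Qed.

Lemma Wtot_fing n (w : nat -> R) f : pos_weight n w -> in_range n f ->
  Wtot n (fun s => (Num.min (w f) (w s) / wseg w f s) ^+ 2) <= 4.
Proof.
move=> hw hf; have := hf; rewrite /in_range => /andP[f1 fn].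
set F := fun s => (Num.min (w f) (w s) / wseg w f s) ^+ 2.
have F0 : forall s, 0 <= F s by move=> s; rewrite /F sqr_ge0.
have split1 : Wtot n F <= \sum_(1 <= s < f.+1) F s + \sum_(f <= s < n.+1) F s.
  rewrite /Wtot (@sumn_split _ _ 1 f.+1 n.+1); last by lia.
  rewrite [\sum_(f <= s < n.+1) _]sum_first; last by lia.
  have := F0 f; lra.
have right : \sum_(f <= s < n.+1) F s <= 2.
  rewrite sum_shift //.
  have := @seq_key R (fun j => w (j + f)%N) (fun j => wseg w f (j + f)%N) (n - f)%N.
  apply.
  - by move=> j hj; apply: hw; rewrite /in_range; lia.
  - by rewrite /wseg add0n minnn maxnn big_nat1.
  - move=> j hj; rewrite /wseg.
    have -> : minn f (j.+1 + f) = f by lia.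
    have -> : minn f (j + f) = f by lia.
    have -> : maxn f (j.+1 + f) = (j + f).+1 by lia.
    have -> : maxn f (j + f) = (j + f)%N by lia.
    by rewrite big_nat_recr //=; lia.
have left : \sum_(1 <= s < f.+1) F s <= 2.
  rewrite sum_rev.
  have K := @seq_key R (fun j => w (f - j)%N) (fun j => wseg w f (f - j)%N) f.-1.
  rewrite prednK ?subn0 in K; last by lia.
  apply: K.
  - by move=> j hj; apply: hw; rewrite /in_range; lia.
  - by rewrite /wseg ?subn0 minnn maxnn big_nat1.
  - move=> j hj; rewrite /wseg.
    have -> : minn f (f - j.+1) = (f - j.+1)%N by lia.
    have -> : minn f (f - j) = (f - j)%N by lia.
    have -> : maxn f (f - j.+1) = f by lia.
    have -> : maxn f (f - j) = f by lia.
    rewrite sum_first; last by lia.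
    have -> : (f - j.+1).+1 = (f - j)%N by lia.
    by rewrite addrC.
lra.
Qed.

Lemma WB_le_WSF n S : (1 <= n)%N -> all (in_range n) S ->
  WB R n S <= 2 * WSF R n S + 2 * (size S)%:R.
Proof.
move=> n1 hS.
apply: (@inf_aff R (WBset n S) (WSFset n S) 2 (2 * (size S)%:R));
  [lra|exact: (WB_lb R hS)|exact: (WSF_ne R S n1)|].
move=> y [w [f [hw [hf ->]]]].
pose w' := fun s => (Num.min (w f) (w s) / wseg w f s) ^+ 2.
have wf := hw f hf.
have hpos : forall s, in_range n s -> 0 < Num.min (w f) (w s) / wseg w f s.
  move=> s hs; have ws := hw s hs; have [h1 _ _] := wseg_bounds hw hf hs.
  by rewrite divr_gt0 // ?lt_min ?wf ?ws //; apply: lt_le_trans h1.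
have hw' : pos_weight n w' by move=> s hs; rewrite /w' exprn_gt0 // hpos.
exists (\sum_(s <- S) log2 (Wtot n w' / w' s)); split; first by exists w'.
apply: sum_aff => s hs.
have hs' : in_range n s by move/allP: hS; apply.
have ws := hw' s hs'.
have W4 := Wtot_fing hw hf.
apply: (le_trans (y := log2 (4 / w' s))).
  apply: log2_le; first by rewrite divr_gt0 //; apply: lt_le_trans (w_le_Wtot hw' hs').
  by rewrite ler_pM2r ?invr_gt0.
rewrite [X in X <= _]log2M ?invr_gt0 // log2_4 /w' -exprVn invf_div log2X; last first.
  by rewrite -invf_div invr_gt0 hpos.
rewrite mulr2n; lra.
Qed.

End G.

Theorem mainTheorem7 (R : realType) :
  exists c : R, 0 < c /\
    forall (n m : nat) (S : seq nat),
      (1 <= n)%N -> (1 <= m)%N -> size S = m ->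
      all (in_range n) S ->
      forall X Y : bound_kind,
        bound R X n S <= c * bound R Y n S + c * m%:R.
Proof.
exists 2; split; first lra.
move=> n m S n1 m1 hsz hS X Y.
have a := SO_le_WB R hS.
have b := FF_le_SO R S n1.
have c := @WSF_le_WB R n S n1 hS.
have d := @WB_le_FF R n S n1 hS.
have e := @WB_le_WSF R n S n1 hS.
have g := @WB_ge0 R n S hS.
rewrite hsz in d e.
have m0 : 0 <= m%:R :> R by [].
have hX : bound R X n S <= WB R n S by case: X => /=; lra.
have hY : WB R n S <= 2 * bound R Y n S + 2 * m%:R by case: Y => /=; lra.
lra.
Qed.
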